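(* Let $G$ be a graph, $X\subseteq V(G)$ a set such that $F := G-X$ is a pseudoforest, and $k$ an integer. If $G$ has an independent set of size at least $k$, then $G$ has an independent set $I$ with $|I|\ge k$ that contains no unnecessary triple, i.e. there is no unnecessary triple ${}_3X\subseteq X$ with ${}_3X \subseteq I$.
   Context: All graphs are finite, simple and undirected; a pseudoforest is a graph each of whose connected components contains at most one cycle. An anchor triangle is a connected component $P$ of $F=G-X$ with $V(P)=\{p_1,p_2,p_3\}$ such that there are vertices $x_1,x_2,x_3\in X$ with $N_G(p_1)=\{p_2,p_3,x_1\}$, $N_G(p_2)=\{p_1,p_3,x_2\}$, $N_G(p_3)=\{p_1,p_2,x_3\}$. A triple (3-element set) ${}_3X\subseteq X$ is unnecessary if there exists an anchor triangle $P$ with $N_G(V(P)) = {}_3X$, where $N_G(S)$ denotes the set of vertices outside $S$ adjacent to some vertex of $S$. *)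

(* Defs.v *)
(* A finite simple graph G is a symmetric irreflexive
   relation e on a finType T. *)
From mathcomp Require Import all_boot.
Set Implicit Arguments. Unset Strict Implicit. Unset Printing Implicit Defensive.

Section Graphs.
Variable T : finType.
Variable e : rel T.

Definition nbr (v : T) : {set T} := [set y | e v y].

Definition nbrs (S : {set T}) : {set T} :=
  [set y | (y \notin S) && [exists s in S, e s y]].

Definition independent (I : {set T}) : Prop :=
  forall x y, x \in I -> y \in I -> ~~ e x y.

Variable X : {set T}.

Definition fe : rel T := fun x y => [&& e x y, x \notin X & y \notin X].

Definition fcomp (v : T) : {set T} := [set y | connect fe v y].

(* A cycle of F, given as its (nonempty) set of edges, each edge an
   unordered pair {x,y} of F; every vertex has degree 0 or 2 in it, and
   the vertices it covers are connected using its edges. *)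
Definition is_cycle (C : {set {set T}}) : Prop :=
  [/\ C != set0,
      (forall c, c \in C -> exists x y, [/\ x != y, c = [set x; y] & fe x y]),
      (forall v, let d := #|[set c in C | v \in c]| in d = 0 \/ d = 2) &
      (forall u v, u \in cover C -> v \in cover C ->
         connect (fun x y => [set x; y] \in C) u v)].

(* F is a pseudoforest: each connected component of F contains at most one
   cycle, i.e. two cycles lying in the same component coincide. *)
Definition pseudoforest : Prop :=
  forall C1 C2 u v, is_cycle C1 -> is_cycle C2 ->
    u \in cover C1 -> v \in cover C2 -> connect fe u v -> C1 = C2.

Definition anchor_triangle (P : {set T}) : Prop :=
  (exists2 p, p \notin X & P = fcomp p) /\
  exists p1 p2 p3 x1 x2 x3,
    [/\ P = [set p1; p2; p3], #|P| = 3,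
        [/\ x1 \in X, x2 \in X & x3 \in X] &
        [/\ nbr p1 = [set p2; p3; x1], nbr p2 = [set p1; p3; x2]
          & nbr p3 = [set p1; p2; x3]]].

Definition unnecessary (Y : {set T}) : Prop :=
  [/\ Y \subset X, #|Y| = 3 & exists2 P, anchor_triangle P & nbrs P = Y].

End Graphs.

(* Main.v *)
From Stdlib Require Import Classical.
Require Import Defs.
From mathcomp Require Import all_boot.

Lemma fcomp_notX (T : finType) (e : rel T) (X : {set T}) p q :
  p \notin X -> q \in fcomp e X p -> q \notin X.
Proof.
move=> pX; rewrite inE => /connectP [s]; case/lastP: s => [|s z].
  by move=> _ ->.
rewrite rcons_path last_rcons => /andP [_ H] ->.
by case/and3P: H.
Qed.

Lemma swap (T : finType) (e : rel T) (X : {set T}) (I Y : {set T}) :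
  symmetric e -> irreflexive e -> independent e I ->
  unnecessary e X Y -> Y \subset I ->
  exists I', [/\ independent e I', #|I'| = #|I| & #|I' :&: X| < #|I :&: X|].
Proof.
move=> sym irr indI [YX _ [P [[p pX HPp] [p1 [p2 [p3 [x1 [x2 [x3
  [HP _ [x1X x2X x3X] [n1 n2 n3]]]]]]]]] HY]] YI.
have nX q : q \in [set p1; p2; p3] -> q \notin X.
  by rewrite -HP HPp; apply: fcomp_notX.
have p1P : p1 \in [set p1; p2; p3] by rewrite !inE eqxx.
have p2P : p2 \in [set p1; p2; p3] by rewrite !inE eqxx !orbT.
have p3P : p3 \in [set p1; p2; p3] by rewrite !inE eqxx !orbT.
have inY x q : x \in X -> q \in [set p1; p2; p3] -> e q x -> x \in I.
  move=> xX qP eqx; apply: (subsetP YI); rewrite -HY HP inE; apply/andP; split.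
    by apply/negP => /nX; rewrite xX.
  by apply/existsP; exists q; rewrite qP.
have e1 : e p1 x1.
  have : x1 \in nbr e p1 by rewrite n1 !inE eqxx !orbT.
  by rewrite inE.
have e2 : e p2 x2.
  have : x2 \in nbr e p2 by rewrite n2 !inE eqxx !orbT.
  by rewrite inE.
have e3 : e p3 x3.
  have : x3 \in nbr e p3 by rewrite n3 !inE eqxx !orbT.
  by rewrite inE.
have x1I := inY _ _ x1X p1P e1.
have x2I := inY _ _ x2X p2P e2.
have x3I := inY _ _ x3X p3P e3.
have notI q x : x \in I -> e q x -> q \notin I.
  by move=> xI eqx; apply/negP => qI; move: (indI _ _ qI xI); rewrite eqx.
have p1I := notI _ _ x1I e1.
have p2I := notI _ _ x2I e2.
have p3I := notI _ _ x3I e3.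
have p1X := nX _ p1P.
have hp1 y : y \in I :\ x1 -> ~~ e p1 y.
  rewrite !inE => /andP [yx1 yI]; apply/negP => ep.
  have : y \in nbr e p1 by rewrite inE.
  rewrite n1 !inE (negbTE yx1) orbF => /orP [] /eqP Ey; subst y.
    by rewrite yI in p2I.
  by rewrite yI in p3I.
exists (p1 |: (I :\ x1)); split.
- move=> x y; rewrite !inE => /orP [/eqP -> | /andP [xx xI]] /orP [/eqP -> | /andP [yx yI]].
  + by rewrite irr.
  + by apply: hp1; rewrite !inE yx yI.
  + by rewrite sym; apply: hp1; rewrite !inE xI xx.
  + exact: indI.
- rewrite cardsU1 !inE negb_and p1I orbT /= add1n.
  by rewrite (cardsD1 x1 I) x1I.
- rewrite setIUl.
  have -> : [set p1] :&: X = set0.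
    by apply/setP => z; rewrite !inE; apply/andP => [[/eqP -> zX]]; rewrite zX in p1X.
  rewrite set0U.
  rewrite (cardsD1 x1 (I :&: X)) inE x1I x1X /= add1n ltnS.
  by rewrite setIDAC.
Qed.

Theorem lemma2 (T : finType) (e : rel T) (X : {set T}) (k : nat) :
  symmetric e -> irreflexive e ->
  pseudoforest e X ->
  (exists I : {set T}, independent e I /\ k <= #|I|) ->
  exists I : {set T},
    [/\ independent e I, k <= #|I| &
        forall Y : {set T}, unnecessary e X Y -> ~~ (Y \subset I)].
Proof.
move=> sym irr _ [I0 [ind0 k0]].
suff H : forall n I, #|I :&: X| < n -> independent e I -> k <= #|I| ->
  exists I : {set T},
    [/\ independent e I, k <= #|I| &
        forall Y : {set T}, unnecessary e X Y -> ~~ (Y \subset I)].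
  exact: (H _ I0 (ltnSn _) ind0 k0).
elim=> [//|n IH] I lt indI kI.
case: (classic (exists Y, unnecessary e X Y /\ Y \subset I)).
  move=> [Y [uY YI]].
  have [I' [ind' c' lt']] := @swap T e X I Y sym irr indI uY YI.
  apply: (IH I') => //; last by rewrite c'.
  by rewrite -ltnS; apply: leq_trans lt.
move=> nex; exists I; split=> // Y uY; apply/negP => YI; apply: nex; by exists Y.
Qed.
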